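(* Let $G$ be a random threshold graph on $n\ge3$ vertices and let $\psi(G)$ be the length of a longest cycle in $G$. Then for every integer $k$ with $3\le k\le n$, $$P(\psi(G)=k)=\left(\tfrac12\right)^{n-1}\left[\binom{n-1}{\lfloor k/2\rfloor}-\binom{k-2}{\lfloor k/2\rfloor}\right].$$
   Context: A threshold graph on $n\ge1$ vertices is built from a base vertex $v_0$ by successively adding $v_1,\dots,v_{n-1}$, each either isolated (adjacent to no earlier vertex) or dominating (adjacent to all earlier vertices); its creation sequence $\mathrm{seq}(G)=s_1\cdots s_{n-1}$ has $s_i=1$ if $v_i$ is dominating and $s_i=0$ otherwise, and each unlabeled threshold graph on $n$ vertices corresponds to exactly one binary string of length $n-1$. A random threshold graph on $n$ vertices is one whose creation sequence is uniformly distributed over all $2^{n-1}$ binary strings of length $n-1$. *)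

(* Defs.v *)
From mathcomp Require Import all_boot all_order all_algebra.
Set Implicit Arguments. Unset Strict Implicit. Unset Printing Implicit Defensive.
Import Order.TTheory GRing.Theory Num.Theory.

(* Threshold graph on vertex set 'I_n = {v_0,...,v_{n-1}} with creation
   sequence s = s_1 ... s_{n-1}, stored as an (n-1)-tuple with
   s_i = nth false s (i-1). *)

Definition dominating (n : nat) (s : (n.-1).-tuple bool) (j : nat) : bool :=
  (0 < j) && nth false s j.-1.

Definition tg_adj (n : nat) (s : (n.-1).-tuple bool) : rel 'I_n :=
  fun i j => (i != j) && dominating s (maxn i j).

Definition has_cycle_of_length (n : nat) (s : (n.-1).-tuple bool) (k : nat) : bool :=
  (3 <= k) && [exists t : k.-tuple 'I_n, uniq t && cycle (tg_adj s) t].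

(* psi(G): length of a longest cycle (0 if G is acyclic). *)
Definition longest_cycle (n : nat) (s : (n.-1).-tuple bool) : nat :=
  \max_(k < n.+1 | has_cycle_of_length s k) k.

Definition tg_prob (n : nat) (E : pred ((n.-1).-tuple bool)) : rat :=
  (#|E|%:R / (2 ^ n.-1)%:R)%R.

(* Main.v *)
Require Import Defs.
From mathcomp Require Import all_boot all_order all_algebra.
From mathcomp Require Import zify.
Import GRing.Theory Num.Theory.
Set Implicit Arguments. Unset Strict Implicit. Unset Printing Implicit Defensive.


Definition Dm (d : seq bool) (x : nat) : bool := (0 < x) && nth false d x.-1.
Definition nadj (d : seq bool) : rel nat := fun i j => (i != j) && Dm d (maxn i j).
Definition hcL (n : nat) (d : seq bool) (k : nat) : bool :=
  (3 <= k) && [exists t : k.-tuple 'I_n,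
     uniq t && cycle (fun i j : 'I_n => (i != j) && Dm d (maxn i j)) t].
Definition lcL n d := \max_(k < n.+1 | hcL n d k) k.

Lemma lcL_eq n (s : (n.-1).-tuple bool) : longest_cycle s = lcL n s.
Proof. by []. Qed.

Lemma hcL_le n d k : hcL n d k -> k <= n.
Proof.
case/andP=> _ /existsP [t /andP [ut _]].
have := uniq_leq_size ut (fun x _ => mem_enum 'I_n x).
by rewrite size_tuple size_enum_ord.
Qed.

Lemma hcLP n d k : reflect (3 <= k /\ exists l : seq nat, [/\ size l = k, uniq l,
   all (fun x => x < n.+1) l & cycle (nadj d) l]) (hcL n.+1 d k).
Proof.
apply: (iffP andP) => -[k3 H]; split => //.
  case/existsP: H => t /andP [ut ct].
  exists (map val t); split.
  - by rewrite size_map size_tuple.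
  - by rewrite map_inj_uniq // ; exact: val_inj.
  - apply/allP => x /mapP [y _ ->]; exact: ltn_ord.
  - rewrite cycle_map (@eq_cycle _ _ (fun i j : 'I_n.+1 => (i != j) && Dm d (maxn i j))) //.
case: H => l [sl ul al cl].
have sz : size (map (fun x => inord x : 'I_n.+1) l) == k by rewrite size_map sl.
apply/existsP; exists (Tuple sz) => /=.
have ml : map val (map (fun x => inord x : 'I_n.+1) l) = l.
  rewrite -map_comp -[RHS]map_id; apply/eq_in_map => x xl /=.
  by rewrite inordK //; exact: (allP al).
apply/andP; split.
  by rewrite -(map_inj_uniq val_inj) ml.
have : cycle (nadj d) (map val (map (fun x => inord x : 'I_n.+1) l)) by rewrite ml.
by rewrite cycle_map (@eq_cycle _ _ (fun i j : 'I_n.+1 => (i != j) && Dm d (maxn i j))).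
Qed.

Fixpoint upc (p x : nat) (s : seq nat) : nat :=
  if s is y :: s' then (x < p <= y) + upc p y s' else 0.

Section A.
Variables (e : seq bool) (p : nat).
Definition Zc x := (p <= x) && ~~ Dm e x.
Definition Oc x := (p <= x) && Dm e x.

Lemma step x y : nadj e x y -> Zc x + (x < p <= y) <= Oc y.
Proof.
rewrite /nadj /Zc /Oc => /andP [nxy D].
case: (leqP x y) => hxy.
  have E : maxn x y = y by apply/maxn_idPr.
  rewrite E in D; rewrite D; move: nxy hxy; case: (Dm e x) => /= nxy hxy; lia.
have E : maxn x y = x by apply/maxn_idPl; exact: ltnW.
rewrite E in D; rewrite D; move: hxy; case: (Dm e y) => /= hxy; lia.
Qed.

Lemma path_count x s : path (nadj e) x s ->
  count Zc (belast x s) + upc p x s <= count Oc s.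
Proof.
elim: s x => [|y s IH] x //= /andP [a ps].
have := IH _ ps; have := step a. lia.
Qed.

Lemma upc_lt x s : x < p -> has (fun y => p <= y) s -> 0 < upc p x s.
Proof.
elim: s x => [|y s IH] x //= xp /orP [py|hs]; first by move: py => /= py; lia.
case: (leqP p y) => py; first lia.
by have := IH _ py hs; lia.
Qed.

Lemma upc_gt x s : has (fun y => y < p) (x :: s) -> p <= last x s -> 0 < upc p x s.
Proof.
elim: s x => [|y s IH] x /=; first by rewrite orbF => H L; lia.
move=> H L.
case: (ltnP x p) => xp.
  case: (leqP p y) => py; first lia.
  have := IH y; rewrite /= py => /(_ isT L). lia.
have H' : has (fun y => y < p) (y :: s) by move: H => /= /orP [H|//]; lia.
have := IH y H' L. lia.
Qed.

Lemma lemA l : cycle (nadj e) l ->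
  count Zc l + (has (fun x => x < p) l && has (fun x => p <= x) l) <= count Oc l.
Proof.
case: l => [|x0 rest] // C.
have PC : path (nadj e) x0 (rcons rest x0) by [].
have H := path_count PC.
rewrite belast_rcons in H.
have E : count Oc (rcons rest x0) = count Oc (x0 :: rest).
  by rewrite -cats1 count_cat /= addn0 addnC.
rewrite E in H.
suff : (has (fun x => x < p) (x0 :: rest) && has (fun x => p <= x) (x0 :: rest))
   <= upc p x0 (rcons rest x0) by move=> h; apply: leq_trans H; rewrite leq_add2l.
case hb : (_ && _) => //; case/andP: hb => hlt hge.
case: (ltnP x0 p) => xp.
  apply: upc_lt => //.
  rewrite -cats1 has_cat; move: hge => /= /orP [h|->] //; lia.
apply: upc_gt; last by rewrite last_rcons.
by move: hlt => /= /orP [->|h] //; rewrite -cats1 has_cat h orbT.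
Qed.
End A.

Definition R (d : seq bool) : nat := foldl (fun r (b : bool) => if b then r.-1 else r.+1) 0 d.

Lemma R_rcons d b : R (rcons d b) = if b then (R d).-1 else (R d).+1.
Proof. by rewrite /R foldl_rcons. Qed.

Lemma R_le d : R d <= size d.
Proof.
elim/last_ind: d => [|d b IH] //; rewrite R_rcons size_rcons; case: b; lia.
Qed.

Lemma R_attain d : exists q, q <= size d /\ R d + count id (drop q d) = count negb (drop q d).
Proof.
elim/last_ind: d => [|d b [q [hq E]]]; first by exists 0.
rewrite R_rcons size_rcons; case: b.
  case: (posnP (R d)) => R0.
    exists (size d).+1; split => //; by rewrite drop_oversize ?size_rcons //= R0.
  exists q; split; first lia.
  rewrite drop_rcons // -cats1 !count_cat /=; lia.
exists q; split; first lia.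
rewrite drop_rcons // -cats1 !count_cat /=; lia.
Qed.

Lemma count_le_uniq (l s : seq nat) (a : pred nat) : uniq l ->
  {subset [seq x <- l | a x] <= s} -> count a l <= size s.
Proof.
move=> ul sub; rewrite -size_filter; apply: uniq_leq_size => //; exact: filter_uniq.
Qed.

Lemma count_split e p (l : seq nat) :
  count (fun x => p <= x) l = count (Zc e p) l + count (Oc e p) l.
Proof.
elim: l => //= x l IH.
have : Zc e p x + Oc e p x = (p <= x) by rewrite /Zc /Oc; case: (Dm e x); case: (p <= x).
lia.
Qed.

Lemma count_Dm_iota e q k :
  count (Dm e) (iota q.+1 k) = count id (take k (drop q e)).
Proof.
elim: k q => [|k IH] q; first by rewrite take0.
rewrite /= IH /Dm /=.
case: (ltnP q (size e)) => h.
  by rewrite (drop_nth false h) /=.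
rewrite !drop_oversize //; last lia.
by rewrite nth_default.
Qed.

Lemma upper_bound d l : uniq l -> all (fun x => x < (size d).+2) l ->
  cycle (nadj (rcons d true)) l -> size l <= (size d).+2 - R d.
Proof.
move=> ul al cl.
have [q [hq E]] := R_attain d.
set e := rcons d true; set p := q.+1.
have hA := lemA p cl.
have hL : count (fun x => x < p) l <= p.
  rewrite -[X in _ <= X](size_iota 0 p); apply: count_le_uniq => // x.
  by rewrite mem_filter mem_iota => /andP [h _]; rewrite add0n.
have hO : count (Oc e p) l <= (count id (drop q d)).+1.
  have : count (Dm e) (iota p ((size d).+1 - q)) = (count id (drop q d)).+1.
    rewrite count_Dm_iota take_oversize; last by rewrite size_drop size_rcons; lia.
    by rewrite /e drop_rcons // -cats1 count_cat /= addn1.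
  move=> <-; rewrite -[X in _ <= X]size_filter; apply: count_le_uniq => // x.
  rewrite !mem_filter /Oc mem_iota => /andP [/andP [h1 h2] xl]; rewrite h2 /=.
  have := allP al x xl; lia.
have hS : size l = count (fun x => x < p) l + count (Zc e p) l + count (Oc e p) l.
  rewrite -addnA -count_split -(count_predC (fun x => x < p)); congr (_ + _).
  by apply: eq_count => x /=; rewrite -leqNgt.
have hD : count id (drop q d) + count negb (drop q d) = size d - q.
  by rewrite count_predC size_drop.
rewrite !has_count (count_split e) in hA.
rewrite -/e in hA. lia.
Qed.

Lemma Dm_rcons d b x : x <= size d -> Dm (rcons d b) x = Dm d x.
Proof.
rewrite /Dm; case: x => [|x] //= h; rewrite nth_rcons; case: ltnP => //; lia.
Qed.

Lemma Dm_last d b : Dm (rcons d b) (size d).+1 = b.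
Proof. by rewrite /Dm /= nth_rcons ltnn eqxx. Qed.

Lemma nadj_rcons d b i j : i <= size d -> j <= size d -> nadj (rcons d b) i j = nadj d i j.
Proof. by move=> hi hj; rewrite /nadj Dm_rcons // geq_max hi hj. Qed.

Lemma nadj_sym d i j : nadj d i j = nadj d j i.
Proof. by rewrite /nadj eq_sym maxnC. Qed.

Lemma nadj_top d x : x <= size d -> nadj (rcons d true) x (size d).+1.
Proof.
move=> hx; rewrite /nadj; have -> : maxn x (size d).+1 = (size d).+1 by apply/maxn_idPr; lia.
rewrite Dm_last andbT; apply/eqP; lia.
Qed.

Lemma path_rcons_eq d b h t : all (fun x => x <= size d) (h :: t) ->
  path (nadj (rcons d b)) h t = path (nadj d) h t.
Proof.
move=> al; apply: (eq_in_path (P := fun x => x <= size d)) => // i j hi hj.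
exact: nadj_rcons.
Qed.

Lemma existsE d : exists h t, [/\ uniq (h :: t), all (fun x => x <= size d) (h :: t),
   path (nadj d) h t & size (h :: t) = (size d).+1 - R d].
Proof.
elim/last_ind: d => [|d b [h [t [u al pa sz]]]]; first by exists 0, [::].
have al' : all (fun x => x <= size (rcons d b)) (h :: t).
  by apply/allP => x /(allP al); rewrite size_rcons; lia.
have pa' : path (nadj (rcons d b)) h t by rewrite path_rcons_eq.
have hR := R_le d.
rewrite R_rcons; case: b al' pa' => al' pa'.
  case: (posnP (R d)) => R0.
    exists (size d).+1, (h :: t); split.
    - rewrite cons_uniq u andbT; apply/negP => hin.
      by have := allP al _ hin; lia.
    - by apply/andP; split; [rewrite size_rcons | exact: al'].
    - by rewrite /= pa' andbT nadj_sym nadj_top //; exact: (allP al h (mem_head _ _)).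
    - by rewrite /= size_rcons R0 /=; move: sz => /= ->; lia.
  have [z hz nz] : exists2 z, z <= size d & z \notin h :: t.
    have : ~~ all (fun z => z \in h :: t) (iota 0 (size d).+1).
      apply/negP => /allP sub.
      have := uniq_leq_size (iota_uniq 0 (size d).+1) sub.
      rewrite size_iota sz; lia.
    case/allPn => z; rewrite mem_iota => /andP [_ hz] nz; exists z => //; lia.
  exists z, ((size d).+1 :: h :: t); split.
  - have nw : (size d).+1 \notin h :: t by apply/negP => /(allP al); lia.
    rewrite cons_uniq inE negb_or nz andbT cons_uniq nw u andbT.
    by apply/eqP; lia.
  - apply/andP; split; first by rewrite size_rcons; lia.
    by apply/andP; split; [rewrite size_rcons | exact: al'].
  - rewrite /= pa' andbT nadj_top //= nadj_sym nadj_top //.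
    exact: (allP al h (mem_head _ _)).
  - by rewrite /= size_rcons; move: sz => /= ->; lia.
exists h, t; split => //.
- by rewrite size_rcons; move: sz => /= ->; lia.
Qed.

Lemma LCval n d T : (forall j, hcL n d j -> j <= T) -> (3 <= T -> hcL n d T) -> T <= n ->
  lcL n d = if 3 <= T then T else 0.
Proof.
move=> ub ex hT; apply/eqP; rewrite eqn_leq; apply/andP; split.
  apply/bigmax_leqP => j hj; have := ub _ hj; case/andP: hj => h3 _.
  case: ifP => //; lia.
case: ifP => // h3.
exact: (@leq_bigmax_cond _ (fun k : 'I_n.+1 => hcL n d k) (fun k => nat_of_ord k) (Ordinal (n:=n.+1) (m:=T) (leq_trans hT (leqnn _)))) (ex h3).
Qed.

Lemma lc_true d : lcL (size d).+2 (rcons d true) =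
  if 3 <= (size d).+2 - R d then (size d).+2 - R d else 0.
Proof.
apply: LCval; last lia.
- move=> j /hcLP [_ [l [<- ul al cl]]]; exact: upper_bound.
- move=> h3; apply/hcLP; split => //.
  have [h [t [u al pa sz]]] := existsE d.
  exists ((size d).+1 :: h :: t); split.
  + have := R_le d; move: sz => /= sz; rewrite sz; lia.
  + rewrite cons_uniq u andbT; apply/negP => /(allP al); lia.
  + apply/allP => x; rewrite inE => /orP [/eqP ->|/(allP al)]; lia.
  + rewrite /= rcons_path path_rcons_eq // pa /=.
    rewrite nadj_sym nadj_top //=; last exact: (allP al h (mem_head _ _)).
    apply: nadj_top; apply: (allP al); exact: mem_last.
Qed.

Lemma hc_false d j : hcL (size d).+2 (rcons d false) j = hcL (size d).+1 d j.
Proof.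
apply/idP/idP.
  move/hcLP => [h3 [l [sl ul al cl]]]; apply/hcLP; split => //.
  have al2 : all (fun x => x < (size d).+1) l.
    apply/allP => x xl; have N := next_cycle cl xl.
    have hy := allP al _ (etrans (mem_next l x) xl).
    move: N hy; set y := next l x => N hy.
    have hx := allP al _ xl; case: (ltnP x (size d).+1) => // hx2.
    have ex : x = (size d).+1 by lia.
    move: N; rewrite /nadj ex; have -> : maxn (size d).+1 y = (size d).+1 by apply/maxn_idPl; lia.
    by rewrite Dm_last andbF.
  exists l; split => //.
  rewrite -(@eq_in_cycle _ (fun x => x < (size d).+1) (nadj (rcons d false))) //.
  move=> i k hi hk; apply: nadj_rcons; rewrite -ltnS //.
move/hcLP => [h3 [l [sl ul al cl]]]; apply/hcLP; split => //.
exists l; split => //.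
  by apply/allP => x /(allP al); lia.
rewrite (@eq_in_cycle _ (fun x => x < (size d).+1) _ (nadj d)) //.
move=> i k hi hk; apply: nadj_rcons; rewrite -ltnS //.
Qed.

Lemma lc_false d : lcL (size d).+2 (rcons d false) = lcL (size d).+1 d.
Proof.
apply/eqP; rewrite eqn_leq; apply/andP; split; apply/bigmax_leqP => j hj.
  rewrite hc_false in hj.
  have hj2 : j < (size d).+2 by have := hcL_le hj; lia.
  exact: (@leq_bigmax_cond _ (fun k : 'I_(size d).+2 => hcL (size d).+1 d k) (fun k => nat_of_ord k) (Ordinal hj2) hj).
rewrite -hc_false in hj.
have hj2 : j < (size d).+3 by have := hcL_le hj; lia.
exact: (@leq_bigmax_cond _ (fun k : 'I_(size d).+3 => hcL (size d).+2 (rcons d false) k) (fun k => nat_of_ord k) (Ordinal hj2) hj).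
Qed.

Fixpoint allb m : seq (seq bool) :=
  if m is m'.+1 then [seq rcons s true | s <- allb m'] ++ [seq rcons s false | s <- allb m']
  else [:: [::]].

Lemma mem_allb m x : (x \in allb m) = (size x == m).
Proof.
elim: m x => [|m IH] x /=; first by rewrite inE; case: x.
rewrite mem_cat; apply/idP/idP.
  by case/orP => /mapP [s]; rewrite IH => /eqP <- ->; rewrite size_rcons.
case/lastP: x => [|s b] //; rewrite size_rcons eqSS -IH => h.
by case: b; [rewrite (map_f (fun s => rcons s true) h) | rewrite (map_f (fun s => rcons s false) h) orbT].
Qed.

Lemma uniq_allb m : uniq (allb m).
Proof.
elim: m => [|m IH] //=; rewrite cat_uniq !map_inj_uniq // ?IH /=; last 2 first.
- by move=> x y /rcons_inj [].
- by move=> x y /rcons_inj [].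
rewrite andbT; apply/hasPn => x /mapP [s _ ->]; apply/negP => /mapP [t _ /eqP].
by move/eqP/(congr1 (last true)); rewrite !last_rcons.
Qed.

Lemma bridge m (P : pred (seq bool)) :
  #|[pred t : m.-tuple bool | P t]| = count P (allb m).
Proof.
rewrite cardE /enum_mem size_filter -enumT.
rewrite (@eq_count _ _ (preim val P)) // -count_map.
apply/permP; apply: uniq_perm.
- by rewrite map_inj_uniq ?enum_uniq //; exact: val_inj.
- exact: uniq_allb.
move=> x; rewrite mem_allb; apply/mapP/idP.
  by case=> t _ ->; rewrite size_tuple.
by move=> h; exists (Tuple h); rewrite ?mem_enum.
Qed.

Lemma count_pred1 (T : Type) (f : T -> nat) r s :
  count (fun x => (f x).-1 == r) s =
  count (fun x => f x == r.+1) s + (r == 0) * count (fun x => f x == 0) s.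
Proof. elim: s => [|x s IH] /=; first lia. rewrite IH; case: (f x) => [|a] /=; move: IH; case: r => [|r] /= _; lia. Qed.

Lemma count_succ1 (T : Type) (f : T -> nat) r s :
  count (fun x => (f x).+1 == r) s = (0 < r) * count (fun x => f x == r.-1) s.
Proof. elim: s => [|x s IH] /=; first lia. rewrite IH; move: IH; case: r => [|r] /= _; lia. Qed.

Definition NF m r := if r <= m then 'C(m, (m - r)./2) else 0.

Lemma NFrec m r : NF m r.+1 + (r == 0) * NF m 0 + (0 < r) * NF m r.-1 = NF m.+1 r.
Proof.
rewrite /NF; case: r => [|r] /=.
  rewrite subn0 mul1n mul0n addn0.
  case: m => [|m] //=.
  have -> : (m.+1 - 1)./2 = m./2 by lia.
  rewrite binS addnC; congr (_ + _).
  have [a Ha] : exists a, m = a.*2 + odd m by exists m./2; rewrite addnC odd_double_half.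
  case: (odd m) Ha => /= Ha.
    by have -> : uphalf m = (m./2).+1 by lia.
  have -> : uphalf m = m./2 by lia.
  have E : m./2 = m.+1 - (m./2).+1 by lia.
  by rewrite {1}E bin_sub //; lia.
rewrite mul0n addn0 mul1n subSS.
case: (ltnP m r) => h.
  by rewrite !ifN //; lia.
case: (ltnP r m) => h2; last first.
  have -> : r = m by lia.
  rewrite ifN; last lia.
  rewrite ifT; last lia.
  by rewrite subnn !bin0.
rewrite [in RHS]ifT; last lia.
case: (ltnP r.+1 m) => h3.
  have -> : (m - r)./2 = ((m - r.+2)./2).+1 by lia.
  by rewrite binS addnC.
have -> : m - r = 1 by lia.
by rewrite /= !bin0.
Qed.

Lemma NRcount m r : count (fun d => R d == r) (allb m) = NF m r.
Proof.
elim: m r => [|m IH] r; first by rewrite /NF /=; case: r.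
rewrite /= count_cat !count_map -NFrec.
rewrite (@eq_count _ _ (fun d => (R d).-1 == r)); last by move=> d; rewrite /= R_rcons.
rewrite (@eq_count _ (preim _ _) (fun d => (R d).+1 == r)); last by move=> d; rewrite /= R_rcons.
by rewrite count_pred1 count_succ1 !IH.
Qed.

Lemma lcL_le n d : lcL n d <= n.
Proof. by apply/bigmax_leqP => j _; rewrite -ltnS. Qed.

Lemma Arec m k : 3 <= k ->
  count (fun d => lcL m.+2 d == k) (allb m.+1) =
  count (fun d => lcL m.+1 d == k) (allb m) + (k <= m.+2) * NF m (m.+2 - k).
Proof.
move=> k3; rewrite /= count_cat !count_map addnC; congr (_ + _).
  apply: eq_in_count => d; rewrite mem_allb => /eqP <- /=.
  by rewrite lc_false.
rewrite -NRcount.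
case: (leqP k m.+2) => hk; rewrite ?mul1n ?mul0n.
  apply: eq_in_count => d; rewrite mem_allb => /eqP hs /=.
  have hR := R_le d; rewrite -hs lc_true; rewrite hs in hR *.
  case: ifP => h; apply/idP/idP => /eqP H; apply/eqP; lia.
rewrite -(count_pred0 (allb m)); apply: eq_in_count => d.
rewrite mem_allb => /eqP hs /=; have hR := R_le d; rewrite -hs lc_true; rewrite hs in hR *.
case: eqP => // E; exfalso; move: E; case: ifP => h E; lia.
Qed.

Lemma Aform m k : 3 <= k -> k <= m.+2 ->
  count (fun d => lcL m.+1 d == k) (allb m) = 'C(m, k./2) - 'C(k - 2, k./2).
Proof.
elim: m k => [|m IH] k k3 km; first lia.
rewrite Arec //.
case: (ltnP m.+2 k) => hk.
  have -> : k = m.+3 by lia.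
  rewrite mul0n addn0; have -> : m.+3 - 2 = m.+1 by lia.
  rewrite subnn.
  rewrite -(count_pred0 (allb m)); apply: eq_in_count => d _ /=.
  case: eqP => // E; exfalso; have := lcL_le m.+1 d; rewrite E; lia.
rewrite IH // mul1n /NF.
rewrite ifT; last lia.
have -> : (m - (m.+2 - k))./2 = (k./2).-1 by lia.
have -> : k./2 = ((k./2).-1).+1 by lia.
rewrite [in RHS]binS.
rewrite -pred_Sn.
have := @leq_bin2l (k - 2) m ((k./2).-1).+1; lia.
Qed.

Theorem mainTheorem10 (n k : nat) (hn : 3 <= n) (hk3 : 3 <= k) (hkn : k <= n) :
  tg_prob (fun s : (n.-1).-tuple bool => longest_cycle s == k) =
  ((2%:R^-1) ^+ n.-1 * ('C(n.-1, k./2)%:R - 'C(k - 2, k./2)%:R) : rat)%R.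
Proof.
case: n hn hkn => [|m] // hn hkn.
rewrite /tg_prob /=.
have -> : #|(fun s : m.-tuple bool => @longest_cycle m.+1 s == k)| = count (fun d => lcL m.+1 d == k) (allb m).
  by rewrite -bridge; apply: eq_card => t.
rewrite Aform //; last lia.
have hb : 'C(k - 2, k./2) <= 'C(m, k./2) by apply: leq_bin2l; lia.
by rewrite natrB // natrX exprVn mulrC.
Qed.
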